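(* Let $\tau=\frac{1+\sqrt5}{2}$, $\sigma=\frac{1-\sqrt5}{2}$, let $l_1,\dots,l_6$ be the standard orthonormal basis of $\mathbb{R}^6$, and let $D_6=\{\sum_{i=1}^6 m_i l_i : m_i\in\mathbb{Z},\ \sum_i m_i \text{ even}\}$. Let $\pi_\parallel:\mathbb{R}^6\to\mathbb{R}^3$ be the linear map with, writing $s=\sqrt{2(2+\tau)}$, $$\pi_\parallel(l_1)=\tfrac1s(1,\tau,0),\ \pi_\parallel(l_2)=\tfrac1s(-1,\tau,0),\ \pi_\parallel(l_3)=\tfrac1s(0,1,\tau),\ \pi_\parallel(l_4)=\tfrac1s(0,1,-\tau),\ \pi_\parallel(l_5)=\tfrac1s(\tau,0,1),\ \pi_\parallel(l_6)=\tfrac1s(-\tau,0,1).$$ Let $H_3\subset O(3)$ be the group generated by $$R_1=\begin{bmatrix}-1&0&0\\0&1&0\\0&0&1\end{bmatrix},\quad R_2=\frac12\begin{bmatrix}1&-\sigma&-\tau\\-\sigma&\tau&1\\-\tau&1&\sigma\end{bmatrix},\quad R_3=\begin{bmatrix}1&0&0\\0&1&0\\0&0&-1\end{bmatrix}.$$ Let $m_1,m_2\in\mathbb{Z}$ with $m_1+m_2$ even and $(m_1,m_2)\neq(0,0)$, and put $c=\sqrt{\tfrac{2}{2+\tau}}\,(m_1-m_2+2m_2\tau)$. Then each of the following seven vectors $\lambda$ lies in $D_6$, its projection $\pi_\parallel(\lambda)$ equals the stated vector of $\mathbb{R}^3$, and the $H_3$-orbit of $\pi_\parallel(\lambda)$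 is the vertex set of the stated polyhedron: (1) $\lambda=m_1l_1+m_2(l_2+l_3+l_4+l_5-l_6)$; $\pi_\parallel(\lambda)=\frac c2(1,\tau,0)$; regular icosahedron. (2) $\lambda=\frac12[(m_1+3m_2)(l_1+l_2+l_3)+(m_1-m_2)(l_4+l_5+l_6)]$; $\pi_\parallel(\lambda)=\frac c2(0,\tau^2,1)$; regular dodecahedron. (3) $\lambda=(m_1+m_2)(l_1+l_2)+2m_2(l_3+l_4)$; $\pi_\parallel(\lambda)=c(0,\tau,0)$; icosidodecahedron. (4) $\lambda=(2m_1+m_2)l_1+(m_1+2m_2)l_2+m_2(3l_3+3l_4+l_5-l_6)$; $\pi_\parallel(\lambda)=\frac c2(1,3\tau,0)$; truncated icosahedron. (5) $\lambda=\frac12[3(m_1+m_2)l_1+(m_1+5m_2)(l_2+l_3)+(m_1+m_2)(l_4+l_5)+(m_1-3m_2)l_6]$; $\pi_\parallel(\lambda)=\frac c2(1,2\tau+1,1)$; small rhombicosidodecahedron. (6) $\lambda=\frac12[(3m_1+5m_2)(l_1+l_2)+(m_1+7m_2)l_3+(m_1+3m_2)l_4+(m_1-m_2)(l_5+l_6)]$; $\pi_\parallel(\lambda)=\frac c2(0,3\tau+1,1)$; truncated dodecahedron. (7) $\lambda=\frac12[5(m_1+m_2)l_1+(3m_1+7m_2)l_2+(m_1+9m_2)l_3+(m_1+5m_2)l_4+(m_1+m_2)l_5+(m_1-3m_2)l_6]$; $\pi_\parallel(\lambda)=\frac c2(1,4\tau+1,1)$; great rhombicosidodecahedron.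
   Context: $D_6$ is the root lattice of type $D_6$, written in the orthonormal basis $l_i$. The map $\pi_\parallel$ is the projection onto one of two complementary 3-dimensional subspaces invariant under an icosahedral subgroup of the point group of $D_6$; $H_3$ is the icosahedral reflection group (of order 120) acting on that subspace. The weights of $D_6$ are $\omega_1=l_1$, $\omega_2=l_1+l_2$, $\omega_3=l_1+l_2+l_3$, $\omega_4=l_1+l_2+l_3+l_4$, $\omega_5=\frac12(l_1+\dots+l_5-l_6)$, $\omega_6=\frac12(l_1+\dots+l_6)$; in these terms the seven vectors are respectively $(m_1-m_2)\omega_1+2m_2\omega_5$, $(m_1-m_2)\omega_6+2m_2\omega_3$, $(m_1-m_2)\omega_2+2m_2\omega_4$, $(m_1-m_2)(\omega_1+\omega_2)+2m_2(\omega_4+\omega_5)$, $(m_1-m_2)(\omega_1+\omega_6)+2m_2(\omega_3+\omega_5)$, $(m_1-m_2)(\omega_2+\omega_6)+2m_2(\omega_3+\omega_4)$, $(m_1-m_2)(\omega_1+\omega_2+\omega_6)+2m_2(\omega_3+\omega_4+\omega_5)$. *)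

(* Defs.v *)
From mathcomp Require Import all_boot all_order all_algebra.
From mathcomp Require Import reals.
Set Implicit Arguments. Unset Strict Implicit. Unset Printing Implicit Defensive.
Import Order.TTheory GRing.Theory Num.Theory.
Local Open Scope ring_scope.

Section Defs.
Variable R : realType.

Definition tau : R := (1 + Num.sqrt 5) / 2.
Definition sigma : R := (1 - Num.sqrt 5) / 2.

Definition vec3 (a b c : R) : 'cV[R]_3 := \col_(i < 3) nth 0 [:: a; b; c] i.
Definition vec6 (a b c d e f : R) : 'cV[R]_6 :=
  \col_(i < 6) nth 0 [:: a; b; c; d; e; f] i.

Definition inD6 (x : 'cV[R]_6) : Prop :=
  exists m : 'I_6 -> int, (2 %| \sum_(i < 6) m i)%Z /\ x = \col_(i < 6) (m i)%:~R.

(* projection pi_parallel : R^6 -> R^3; column j is pi_parallel(l_(j+1)) *)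
Definition spar : R := Num.sqrt (2 * (2 + tau)).
Definition pi_par_cols : seq 'cV[R]_3 :=
  [:: vec3 1 tau 0; vec3 (-1) tau 0; vec3 0 1 tau; vec3 0 1 (- tau);
      vec3 tau 0 1; vec3 (- tau) 0 1].
Definition Ppar : 'M[R]_(3, 6) :=
  \matrix_(i < 3, j < 6) ((nth 0 pi_par_cols j) i ord0 / spar).
Definition pi_par (x : 'cV[R]_6) : 'cV[R]_3 := Ppar *m x.

Definition mx3 (a b c d e f g h k : R) : 'M[R]_3 :=
  \matrix_(i < 3, j < 3) nth 0 (nth [::] [:: [:: a; b; c]; [:: d; e; f]; [:: g; h; k]] i) j.
Definition R1 : 'M[R]_3 := mx3 (-1) 0 0  0 1 0  0 0 1.
Definition R2 : 'M[R]_3 :=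
  2^-1 *: mx3 1 (- sigma) (- tau)  (- sigma) tau 1  (- tau) 1 sigma.
Definition R3 : 'M[R]_3 := mx3 1 0 0  0 1 0  0 0 (-1).

Inductive inH3 : 'M[R]_3 -> Prop :=
  | H3_one : inH3 1%:M
  | H3_R1 : inH3 R1
  | H3_R2 : inH3 R2
  | H3_R3 : inH3 R3
  | H3_mul M N : inH3 M -> inH3 N -> inH3 (M *m N)
  | H3_inv M : inH3 M -> inH3 (invmx M).

Definition orbitH3 (v : 'cV[R]_3) (w : 'cV[R]_3) : Prop :=
  exists2 M, inH3 M & w = M *m v.

(* the set of all cyclic permutations, with all sign changes, of the given triples *)
Definition cyc_signs (gens : seq (R * R * R)) (w : 'cV[R]_3) : Prop :=
  exists g, g \in gens /\ exists (e : 'I_3 -> bool) (r : nat),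
    let u := fun i : nat => (-1) ^+ (nth false [seq e i | i <- enum 'I_3] i)
                            * nth 0 [:: g.1.1; g.1.2; g.2] i in
    w = \col_(i < 3) u ((i + r) %% 3)%N.

(* "S is the vertex set of a polyhedron similar to the model P":
   S is the image of P under a similarity x |-> k Q x + t, k > 0, Q orthogonal *)
Definition similar_to (S P : 'cV[R]_3 -> Prop) : Prop :=
  exists k : R, 0 < k /\ exists (Q : 'M[R]_3) (t : 'cV[R]_3),
    Q^T *m Q = 1%:M /\ forall w, S w <-> exists2 p, P p & w = k *: (Q *m p) + t.

(* standard Cartesian coordinates (golden ratio = tau) of the vertex sets *)
Definition icosahedron := cyc_signs [:: (0, 1, tau)].
Definition dodecahedron := cyc_signs [:: (1, 1, 1); (0, tau, tau^-1)].
Definition icosidodecahedron :=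
  cyc_signs [:: (0, 0, tau); (2^-1, tau / 2, tau ^+ 2 / 2)].
Definition truncated_icosahedron :=
  cyc_signs [:: (0, 1, 3 * tau); (1, 2 + tau, 2 * tau); (tau, 2, tau ^+ 3)].
Definition small_rhombicosidodecahedron :=
  cyc_signs [:: (1, 1, tau ^+ 3); (tau ^+ 2, tau, 2 * tau); (2 + tau, 0, tau ^+ 2)].
Definition truncated_dodecahedron :=
  cyc_signs [:: (0, tau^-1, 2 + tau); (tau^-1, tau, 2 * tau); (tau, 2, tau + 1)].
Definition great_rhombicosidodecahedron :=
  cyc_signs [:: (tau^-1, tau^-1, 3 + tau); (2 / tau, tau, 1 + 2 * tau);
                (tau^-1, tau ^+ 2, -1 + 3 * tau); (2 * tau - 1, 2, 2 + tau);
                (tau, 3, 2 * tau)].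

Definition item_claim (lam : 'cV[R]_6) (w : 'cV[R]_3) (P : 'cV[R]_3 -> Prop) : Prop :=
  [/\ inD6 lam, pi_par lam = w & similar_to (orbitH3 (pi_par lam)) P].

End Defs.

Arguments icosahedron R : clear implicits.
Arguments dodecahedron R : clear implicits.
Arguments icosidodecahedron R : clear implicits.
Arguments truncated_icosahedron R : clear implicits.
Arguments small_rhombicosidodecahedron R : clear implicits.
Arguments truncated_dodecahedron R : clear implicits.
Arguments great_rhombicosidodecahedron R : clear implicits.

(* Main.v *)
Require Import Defs.
From mathcomp Require Import all_boot all_order all_algebra.
From mathcomp Require Import reals.
From mathcomp Require Import ring lra zify.
Set Implicit Arguments. Unset Strict Implicit. Unset Printing Implicit Defensive.
Import Order.TTheory GRing.Theory Num.Theory.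
Local Open Scope ring_scope.


Definition Q5 := (rat * rat)%type.
Definition qc (x : rat) : Q5 := (x, 0).
Definition qtau : Q5 := (0, 1).
Definition qadd (p q : Q5) : Q5 := (p.1 + q.1, p.2 + q.2).
Definition qopp (p : Q5) : Q5 := (- p.1, - p.2).
Definition qmul (p q : Q5) : Q5 :=
  (p.1 * q.1 + p.2 * q.2, p.1 * q.2 + p.2 * q.1 + p.2 * q.2).

Section Ev.
Variable R : realType.
Local Notation tau := (tau R).
Definition ev (p : Q5) : R := ratr p.1 + ratr p.2 * tau.

Lemma sqrt5_2 : Num.sqrt (5:R) ^+ 2 = 5.
Proof. by rewrite sqr_sqrtr // ler0n. Qed.

Lemma tau2 : tau ^+ 2 = tau + 1.
Proof.
rewrite /Defs.tau; have h := sqrt5_2.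
have -> : ((1 + Num.sqrt (5:R)) / 2) ^+ 2 = (1 + 2 * Num.sqrt 5 + Num.sqrt 5 ^+ 2) / 4.
  by field.
rewrite h; by field.
Qed.

Lemma evM p q : ev (qmul p q) = ev p * ev q.
Proof.
rewrite /ev /qmul /= !rmorphD !rmorphM /=.
set x1 := ratr p.1; set y1 := ratr p.2; set x2 := ratr q.1; set y2 := ratr q.2.
have -> : (x1 + y1 * tau) * (x2 + y2 * tau) = x1 * x2 + (x1 * y2 + y1 * x2) * tau + y1 * y2 * tau ^+ 2 by ring.
rewrite tau2; ring.
Qed.
End Ev.
Section Ev2.
Variable R : realType.
Local Notation tau := (tau R).
Local Notation ev := (@ev R).

Lemma evD p q : ev (qadd p q) = ev p + ev q.
Proof. rewrite /ev /qadd /= !rmorphD /=; ring. Qed.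
Lemma evN p : ev (qopp p) = - ev p.
Proof. rewrite /ev /qopp /= !rmorphN /=; ring. Qed.
Lemma evE x y : ev (x, y) = ratr x + ratr y * tau.
Proof. by []. Qed.

Lemma sigmaE : sigma R = 1 - tau.
Proof. rewrite /sigma /Defs.tau; by field. Qed.

Lemma tau_gt0 : 0 < tau.
Proof. rewrite /Defs.tau divr_gt0 //; have := sqrtr_ge0 (5:R); lra. Qed.

Lemma vec3E (x y z : R) (i : 'I_3) : vec3 x y z i ord0 = nth 0 [:: x; y; z] i.
Proof. by rewrite mxE. Qed.

Lemma mx3_vec3 (a b c d e f g h k x y z : R) :
  mx3 a b c d e f g h k *m vec3 x y z =
  vec3 (a * x + b * y + c * z) (d * x + e * y + f * z) (g * x + h * y + k * z).
Proof.
apply/matrixP => i j; rewrite !mxE !big_ord_recr big_ord0 /= !mxE /= add0r.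
by case: i => [[|[|[|//]]] ?].
Qed.

Lemma scale_vec3 (r x y z : R) : r *: vec3 x y z = vec3 (r * x) (r * y) (r * z).
Proof. by apply/matrixP => i j; rewrite !mxE; case: i => [[|[|[|//]]] ?]. Qed.

Lemma add_vec3 (x y z x' y' z' : R) : vec3 x y z + vec3 x' y' z' = vec3 (x + x') (y + y') (z + z').
Proof. by apply/matrixP => i j; rewrite !mxE; case: i => [[|[|[|//]]] ?]. Qed.
End Ev2.
Definition V := (Q5 * Q5 * Q5)%type.
Definition mkV (x y z : Q5) : V := (x, y, z).
Definition qhalf : Q5 := qc (2%:R)^-1.
Definition qone : Q5 := qc 1.
Definition qms : Q5 := (-1, 1).   (* - sigma = tau - 1 *)
Definition qsg : Q5 := (1, -1).   (* sigma = 1 - tau *)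
Definition qmt : Q5 := (0, -1).
Definition g1 (v : V) : V := mkV (qopp v.1.1) v.1.2 v.2.
Definition g3 (v : V) : V := mkV v.1.1 v.1.2 (qopp v.2).
Definition g2 (v : V) : V :=
  let: (x, y, z) := v in
  mkV (qmul qhalf (qadd x (qadd (qmul qms y) (qmul qmt z))))
      (qmul qhalf (qadd (qmul qms x) (qadd (qmul qtau y) z)))
      (qmul qhalf (qadd (qmul qmt x) (qadd y (qmul qsg z)))).
Definition gen (i : nat) : V -> V :=
  match i with 0 => g1 | 1 => g2 | _ => g3 end.

Section Gens.
Variable R : realType.
Local Notation tau := (tau R).
Local Notation ev := (@ev R).
Definition evV (v : V) : 'cV[R]_3 := vec3 (ev v.1.1) (ev v.1.2) (ev v.2).
Definition Rm (i : nat) : 'M[R]_3 :=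
  match i with 0 => R1 R | 1 => R2 R | _ => R3 R end.

Lemma ev_half : ev qhalf = 2^-1.
Proof. by rewrite /ev /= fmorphV rmorph_nat rmorph0 mul0r addr0. Qed.

Ltac evsimp := rewrite ?(evM, evD, evN, ev_half) /ev /= ?(rmorph0, rmorph1, rmorphN).

Lemma gen_ok i v : Rm i *m evV v = evV (gen i v).
Proof.
case: v => [[x y] z]; rewrite /evV /=.
case: i => [|[|i]] /=.
- rewrite /R1 mx3_vec3 /= /ev /= rmorphN /=; congr vec3; ring.
- rewrite /R2 -scalemxAl mx3_vec3 scale_vec3 sigmaE; congr vec3; evsimp; ring.
- rewrite /R3 mx3_vec3 /= /ev /= rmorphN /=; congr vec3; ring.
Qed.
End Gens.
Definition q0 : Q5 := qc 0.
Definition ue (j : nat) : V :=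
  match j with 0 => mkV qone q0 q0 | 1 => mkV q0 qone q0 | _ => mkV q0 q0 qone end.

Section Inv.
Variable R : realType.
Local Notation ev := (@ev R).
Local Notation evV := (@evV R).
Local Notation Rm := (@Rm R).

Lemma evV_ue (j : 'I_3) : evV (ue j) = delta_mx j 0.
Proof.
apply/matrixP => r k; rewrite !mxE /= !ord1 eqxx andbT.
case: j => [[|[|[|//]]] ?]; case: r => [[|[|[|//]]] ?] /=;
  by rewrite /ev /= ?(rmorph0, rmorph1) ?mul0r ?addr0.
Qed.

Lemma gen_gen i (j : 'I_3) : gen i (gen i (ue j)) = ue j.
Proof.
apply/eqP; case: i => [|[|i]]; by case: j => [[|[|[|//]]] ?]; vm_compute.
Qed.

Lemma Rm_inv i : Rm i *m Rm i = 1%:M.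
Proof.
apply/matrixP => r j.
have : col j (Rm i *m Rm i) = col j 1%:M.
  by rewrite !colE -mulmxA -evV_ue !gen_ok gen_gen mul1mx.
by move/matrixP/(_ r 0); rewrite !mxE.
Qed.
End Inv.
Definition closedL (L : seq V) :=
  all (fun u => [&& g1 u \in L, g2 u \in L & g3 u \in L]) L.

Definition applyw (ws : seq nat) (v : V) : V := foldr gen v ws.

Section Orbit.
Variable R : realType.
Local Notation ev := (@ev R).
Local Notation evV := (@evV R).
Local Notation Rm := (@Rm R).
Variable L : seq V.
Hypothesis HL : closedL L.
Definition Sset (x : 'cV[R]_3) := exists2 u, u \in L & x = evV u.

Lemma gen_in i u : u \in L -> gen i u \in L.
Proof.
move=> uL; have := allP HL u uL; case/and3P => h1 h2 h3.
by case: i => [|[|i]].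
Qed.

Lemma Rm_inv_ok i : Rm i \in unitmx /\ forall x, Sset x <-> Sset (Rm i *m x).
Proof.
split; first by case: (mulmx1_unit (Rm_inv R i)).
move=> x; split.
- by case=> u uL ->; exists (gen i u); [exact: gen_in | rewrite gen_ok].
- case=> u uL e; exists (gen i u); first exact: gen_in.
  by rewrite -gen_ok -e mulmxA Rm_inv mul1mx.
Qed.

Lemma inH3_ok M : inH3 M -> M \in unitmx /\ forall x, Sset x <-> Sset (M *m x).
Proof.
elim=> {M}.
- by split; [exact: unitmx1 | move=> x; rewrite mul1mx].
- exact: (Rm_inv_ok 0).
- exact: (Rm_inv_ok 1).
- exact: (Rm_inv_ok 2).
- move=> M N _ [uM hM] _ [uN hN]; split; first by rewrite unitmx_mul uM uN.
  by move=> x; rewrite hN hM mulmxA.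
- move=> M _ [uM hM]; split; first by rewrite unitmx_inv.
  by move=> x; rewrite (hM (invmx M *m x)) mulKVmx.
Qed.

Definition matw (ws : seq nat) : 'M[R]_3 := foldr (fun i M => Rm i *m M) 1%:M ws.

Lemma matw_ok ws v : matw ws *m evV v = evV (applyw ws v).
Proof.
elim: ws => [|i ws IH] /=; first by rewrite mul1mx.
by rewrite -mulmxA IH gen_ok.
Qed.

Lemma matw_H3 ws : inH3 (matw ws).
Proof.
elim: ws => [|i ws IH] /=; first exact: H3_one.
apply: H3_mul => //; case: i => [|[|i]] /=; constructor.
Qed.

Variable v0 : V.
Variable words : seq (seq nat).
Hypothesis HLw : L = [seq applyw ws v0 | ws <- words].
Hypothesis Hv0 : v0 \in L.

Lemma orbit_L (s : R) w :
  orbitH3 (s *: evV v0) w <-> exists2 u, u \in L & w = s *: evV u.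
Proof.
split.
- case=> M /inH3_ok [_ hM] ->.
  have : Sset (M *m evV v0) by rewrite -hM; exists v0.
  by case=> u uL e; exists u => //; rewrite -scalemxAr e.
- case=> u; rewrite HLw => /mapP [ws _ ->] ->.
  exists (matw ws); first exact: matw_H3.
  by rewrite -scalemxAr matw_ok.
Qed.
End Orbit.
Definition sgnQ (b : bool) (x : Q5) : Q5 := if b then qopp x else x.
Definition cycsign (q : V) (p : bool * bool * bool * nat) : V :=
  let: (e0, e1, e2, r) := p in
  let u k := sgnQ (nth false [:: e0; e1; e2] k) (nth q0 [:: q.1.1; q.1.2; q.2] k) in
  mkV (u ((0 + r) %% 3)%N) (u ((1 + r) %% 3)%N) (u ((2 + r) %% 3)%N).
Definition bools := [:: true; false].
Definition params : seq (bool * bool * bool * nat) :=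
  flatten [seq flatten [seq flatten [seq [seq (e0, e1, e2, r) | r <- [:: 0; 1; 2]%N]
     | e2 <- bools] | e1 <- bools] | e0 <- bools].
Definition Lm (gensQ : seq V) := [seq cycsign q p | q <- gensQ, p <- params].
Definition permV (sw : bool) (v : V) : V :=
  let: (x, y, z) := v in if sw then mkV x z y else mkV x y z.
Definition fmap (f : Q5) (sw : bool) (q : V) : V :=
  let: (x, y, z) := permV sw q in mkV (qmul f x) (qmul f y) (qmul f z).
Definition checkAll (v0 : V) (words : seq (seq nat)) (gensQ : seq V) (f : Q5) (sw : bool) :=
  let L := [seq applyw ws v0 | ws <- words] in
  let Lm' := Lm gensQ in
  [&& closedL L, v0 \in L, all (fun q => fmap f sw q \in L) Lm' &
      all (fun u => u \in [seq fmap f sw q | q <- Lm']) L].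

Lemma enum3 (T : Type) (e : 'I_3 -> T) :
  [seq e i | i <- enum 'I_3] = [:: e (@Ordinal 3 0 isT); e (@Ordinal 3 1 isT); e (@Ordinal 3 2 isT)].
Proof.
have -> : enum 'I_3 = [:: (@Ordinal 3 0 isT); (@Ordinal 3 1 isT); (@Ordinal 3 2 isT)].
  by apply: (inj_map val_inj); rewrite val_enum_ord.
by [].
Qed.

Lemma params_in e0 e1 e2 r : (r < 3)%N -> (e0, e1, e2, r) \in params.
Proof. by case: e0; case: e1; case: e2; case: r => [|[|[|]]]. Qed.

Section Model.
Variable R : realType.
Local Notation ev := (@ev R).
Local Notation evV := (@evV R).
Definition evT (q : V) : R * R * R := (ev q.1.1, ev q.1.2, ev q.2).

Lemma ev_sgn b x : ev (sgnQ b x) = (-1) ^+ b * ev x.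
Proof. by case: b; rewrite /= ?evN ?expr1 ?expr0 ?mulN1r ?mul1r. Qed.

Lemma nth_helper e0 e1 e2 (q : V) k :
  (-1) ^+ (nth false [:: e0; e1; e2] k) * nth 0 [:: (evT q).1.1; (evT q).1.2; (evT q).2] k
  = ev (sgnQ (nth false [:: e0; e1; e2] k) (nth q0 [:: q.1.1; q.1.2; q.2] k)).
Proof.
rewrite ev_sgn; case: k => [|[|[|k]]] //=.
by rewrite !nth_nil /ev /= rmorph0 mul0r addr0.
Qed.

Lemma col_cyc (e : 'I_3 -> bool) e0 e1 e2 (q : V) (r : nat) :
  [seq e i | i <- enum 'I_3] = [:: e0; e1; e2] ->
  \col_(i < 3) ((-1) ^+ (nth false [seq e i | i <- enum 'I_3] ((i + r) %% 3)%N)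
         * nth 0 [:: (evT q).1.1; (evT q).1.2; (evT q).2] ((i + r) %% 3)%N)
  = evV (cycsign q (e0, e1, e2, r)).
Proof.
move=> He; apply/matrixP => i j; rewrite !mxE He /= nth_helper.
by case: i => [[|[|[|//]]] ?].
Qed.

Lemma cyc_model gensQ w :
  cyc_signs (map evT gensQ) w <-> exists2 q, q \in Lm gensQ & w = evV q.
Proof.
split.
- case=> g [/mapP [q qin ->]] [e [r ->]].
  exists (cycsign q (e (@Ordinal 3 0 isT), e (@Ordinal 3 1 isT), e (@Ordinal 3 2 isT), (r %% 3)%N)).
    by apply: allpairs_f => //; apply: params_in; rewrite ltn_mod.
  rewrite (col_cyc (e0 := e (@Ordinal 3 0 isT)) (e1 := e (@Ordinal 3 1 isT)) (e2 := e (@Ordinal 3 2 isT))) ?enum3 //.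
  by rewrite /cycsign !modnDmr.
- case=> q /allpairsP [[q1 [[[e0 e1] e2] r]] [q1in _ ->]] -> /=.
  exists (evT q1); split; first exact: map_f.
  exists (fun i : 'I_3 => nth false [:: e0; e1; e2] i), r.
  by symmetry; apply: col_cyc; rewrite enum3.
Qed.
End Model.
Section Core.
Variable R : realType.
Local Notation ev := (@ev R).
Local Notation evV := (@evV R).

Definition Qm (sw : bool) : 'M[R]_3 :=
  if sw then mx3 1 0 0 0 0 1 0 1 0 else mx3 1 0 0 0 1 0 0 0 1.

Lemma Qm_orth sw : (Qm sw)^T *m Qm sw = 1%:M.
Proof.
apply/matrixP => i j; rewrite !mxE !big_ord_recr big_ord0 /= !mxE /= add0r.
by case: sw; case: i => [[|[|[|//]]] ?]; case: j => [[|[|[|//]]] ?]; rewrite !mxE /=; ring.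
Qed.

Lemma fmap_ok f sw q : evV (fmap f sw q) = ev f *: (Qm sw *m evV q).
Proof.
case: q => [[x y] z]; case: sw;
  rewrite /Qm /evV /= mx3_vec3 scale_vec3 !evM; congr vec3; ring.
Qed.

Lemma similar_core (v0 : V) words gensQ (f : Q5) (sw : bool) (s : R) :
  s != 0 -> 0 < ev f -> checkAll v0 words gensQ f sw ->
  Defs.similar_to (orbitH3 (s *: evV v0)) (cyc_signs (map (@evT R) gensQ)).
Proof.
move=> s0 f0 /and4P [hcl hv0 h1 h2].
set L := [seq applyw ws v0 | ws <- words] in hcl hv0 h1 h2.
have x0 : s * ev f != 0 by rewrite mulf_neq0 // gt_eqF.
have [k [Q [k0 Qo Qe]]] : exists k : R, exists Q : 'M[R]_3,
    [/\ 0 < k, Q^T *m Q = 1%:M & forall p : 'cV[R]_3, k *: (Q *m p) = (s * ev f) *: (Qm sw *m p)].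
  case: (ltP 0 (s * ev f)) => hx.
    by exists (s * ev f), (Qm sw); split => //; exact: Qm_orth.
  exists (- (s * ev f)), (- Qm sw); split.
  - by rewrite oppr_gt0 lt_neqAle hx x0.
  - have -> : (- Qm sw)^T = - (Qm sw)^T by apply/matrixP => i j; rewrite !mxE.
    by rewrite mulNmx mulmxN opprK Qm_orth.
  - by move=> p; rewrite mulNmx scalerN scaleNr opprK.
exists k; split => //; exists Q, 0; split => // w.
rewrite (orbit_L hcl (words := words) (v0 := v0)) //.
split.
- case=> u uL ->.
  have := allP h2 u uL; case/mapP => q qin ->.
  exists (evV q); first by apply/cyc_model; exists q.
  by rewrite addr0 Qe fmap_ok scalerA.
- case=> p /cyc_model [q qin ->] ->.
  exists (fmap f sw q); first exact: (allP h1).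
  by rewrite addr0 Qe fmap_ok scalerA.
Qed.
End Core.
Definition v0_ico : V := mkV (1%:R, 0%:R) (0%:R, 1%:R) (0%:R, 0%:R).
Definition gens_ico : seq V := [:: mkV (0%:R, 0%:R) (1%:R, 0%:R) (0%:R, 1%:R)].
Definition words_ico : seq (seq nat) := [:: [:: ]; [:: 0]; [:: 1; 0]; [:: 2; 1; 0]; [:: 1; 2; 1; 0]; [:: 0; 1; 2; 1; 0]; [:: 2; 1; 2; 1; 0]; [:: 2; 0; 1; 2; 1; 0]; [:: 1; 2; 0; 1; 2; 1; 0]; [:: 2; 1; 2; 0; 1; 2; 1; 0]; [:: 1; 2; 1; 2; 0; 1; 2; 1; 0]; [:: 0; 1; 2; 1; 2; 0; 1; 2; 1; 0]].
Definition f_ico : Q5 := (1%:R, 0%:R).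
Lemma check_ico : checkAll v0_ico words_ico gens_ico f_ico false.
Proof. by vm_compute. Qed.

Definition v0_dod : V := mkV (0%:R, 0%:R) (1%:R, 1%:R) (1%:R, 0%:R).
Definition gens_dod : seq V := [:: mkV (1%:R, 0%:R) (1%:R, 0%:R) (1%:R, 0%:R); mkV (0%:R, 0%:R) (0%:R, 1%:R) ((- 1%:R), 1%:R)].
Definition words_dod : seq (seq nat) := [:: [:: ]; [:: 2]; [:: 1; 2]; [:: 0; 1; 2]; [:: 2; 1; 2]; [:: 2; 0; 1; 2]; [:: 1; 2; 1; 2]; [:: 1; 2; 0; 1; 2]; [:: 0; 1; 2; 1; 2]; [:: 0; 1; 2; 0; 1; 2]; [:: 2; 1; 2; 0; 1; 2]; [:: 2; 0; 1; 2; 0; 1; 2]; [:: 1; 2; 1; 2; 0; 1; 2]; [:: 1; 2; 0; 1; 2; 0; 1; 2]; [:: 0; 1; 2; 1; 2; 0; 1; 2]; [:: 0; 1; 2; 0; 1; 2; 0; 1; 2]; [:: 2; 1; 2; 0; 1; 2; 0; 1; 2]; [:: 2; 0; 1; 2; 0; 1; 2; 0; 1; 2]; [:: 1; 2; 0; 1; 2; 0; 1; 2; 0; 1; 2]; [:: 2; 1; 2; 0; 1; 2; 0; 1; 2; 0; 1; 2]].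
Definition f_dod : Q5 := (0%:R, 1%:R).
Lemma check_dod : checkAll v0_dod words_dod gens_dod f_dod false.
Proof. by vm_compute. Qed.

Definition v0_icd : V := mkV (0%:R, 0%:R) (0%:R, 2%:R) (0%:R, 0%:R).
Definition gens_icd : seq V := [:: mkV (0%:R, 0%:R) (0%:R, 0%:R) (0%:R, 1%:R); mkV ((1%:R / 2%:R), 0%:R) (0%:R, (1%:R / 2%:R)) ((1%:R / 2%:R), (1%:R / 2%:R))].
Definition words_icd : seq (seq nat) := [:: [:: ]; [:: 1]; [:: 0; 1]; [:: 2; 1]; [:: 2; 0; 1]; [:: 1; 2; 1]; [:: 1; 2; 0; 1]; [:: 0; 1; 2; 1]; [:: 2; 1; 2; 1]; [:: 0; 1; 2; 0; 1]; [:: 2; 1; 2; 0; 1]; [:: 2; 0; 1; 2; 1]; [:: 2; 0; 1; 2; 0; 1]; [:: 1; 2; 1; 2; 0; 1]; [:: 1; 2; 0; 1; 2; 1]; [:: 1; 2; 0; 1; 2; 0; 1]; [:: 0; 1; 2; 1; 2; 0; 1]; [:: 2; 1; 2; 0; 1; 2; 1]; [:: 0; 1; 2; 0; 1; 2; 0; 1]; [:: 2; 1; 2; 0; 1; 2; 0; 1]; [:: 1; 2; 1; 2; 0; 1; 2; 1]; [:: 2; 0; 1; 2; 0; 1; 2; 0; 1]; [:: 1; 2; 1; 2; 0; 1; 2; 0; 1]; [:: 0; 1; 2; 1; 2; 0; 1; 2; 1]; [:: 1; 2; 0; 1; 2; 0; 1; 2; 0; 1]; [:: 0; 1; 2; 1;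 2; 0; 1; 2; 0; 1]; [:: 0; 1; 2; 0; 1; 2; 0; 1; 2; 0; 1]; [:: 2; 1; 2; 0; 1; 2; 0; 1; 2; 0; 1]; [:: 2; 0; 1; 2; 0; 1; 2; 0; 1; 2; 0; 1]; [:: 1; 2; 0; 1; 2; 0; 1; 2; 0; 1; 2; 0; 1]].
Definition f_icd : Q5 := (2%:R, 0%:R).
Lemma check_icd : checkAll v0_icd words_icd gens_icd f_icd true.
Proof. by vm_compute. Qed.

Definition v0_tic : V := mkV (1%:R, 0%:R) (0%:R, 3%:R) (0%:R, 0%:R).
Definition gens_tic : seq V := [:: mkV (0%:R, 0%:R) (1%:R, 0%:R) (0%:R, 3%:R); mkV (1%:R, 0%:R) (2%:R, 1%:R) (0%:R, 2%:R); mkV (0%:R, 1%:R) (2%:R, 0%:R) (1%:R, 2%:R)].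
Definition words_tic : seq (seq nat) := [:: [:: ]; [:: 0]; [:: 1]; [:: 1; 0]; [:: 0; 1]; [:: 2; 1]; [:: 0; 1; 0]; [:: 2; 1; 0]; [:: 2; 0; 1]; [:: 1; 2; 1]; [:: 2; 0; 1; 0]; [:: 1; 2; 1; 0]; [:: 1; 2; 0; 1]; [:: 0; 1; 2; 1]; [:: 2; 1; 2; 1]; [:: 1; 2; 0; 1; 0]; [:: 0; 1; 2; 1; 0]; [:: 2; 1; 2; 1; 0]; [:: 0; 1; 2; 0; 1]; [:: 2; 1; 2; 0; 1]; [:: 2; 0; 1; 2; 1]; [:: 0; 1; 2; 0; 1; 0]; [:: 2; 1; 2; 0; 1; 0]; [:: 2; 0; 1; 2; 1; 0]; [:: 2; 0; 1; 2; 0; 1]; [:: 1; 2; 1; 2; 0; 1]; [:: 1; 2; 0; 1; 2; 1]; [:: 2; 0; 1; 2; 0; 1; 0]; [:: 1; 2; 1; 2; 0; 1; 0]; [:: 1; 2; 0; 1; 2; 1; 0]; [:: 1; 2; 0; 1; 2; 0; 1]; [:: 0; 1; 2; 1; 2; 0; 1]; [:: 2; 1; 2; 0; 1; 2; 1]; [:: 1; 2; 0; 1; 2; 0; 1; 0]; [:: 0; 1; 2; 1; 2; 0; 1; 0]; [:: 2; 1; 2; 0; 1; 2; 1; 0]; [:: 0; 1; 2; 0; 1; 2; 0; 1]; [:: 2; 1; 2; 0; 1; 2; 0; 1]; [:: 1; 2; 1; 2; 0; 1; 2; 1]; [:: 0; 1; 2; 0; 1; 2; 0; 1; 0]; [::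 2; 1; 2; 0; 1; 2; 0; 1; 0]; [:: 1; 2; 1; 2; 0; 1; 2; 1; 0]; [:: 2; 0; 1; 2; 0; 1; 2; 0; 1]; [:: 1; 2; 1; 2; 0; 1; 2; 0; 1]; [:: 0; 1; 2; 1; 2; 0; 1; 2; 1]; [:: 2; 0; 1; 2; 0; 1; 2; 0; 1; 0]; [:: 1; 2; 1; 2; 0; 1; 2; 0; 1; 0]; [:: 0; 1; 2; 1; 2; 0; 1; 2; 1; 0]; [:: 1; 2; 0; 1; 2; 0; 1; 2; 0; 1]; [:: 0; 1; 2; 1; 2; 0; 1; 2; 0; 1]; [:: 1; 2; 0; 1; 2; 0; 1; 2; 0; 1; 0]; [:: 0; 1; 2; 1; 2; 0; 1; 2; 0; 1; 0]; [:: 0; 1; 2; 0; 1; 2; 0; 1; 2; 0; 1]; [:: 2; 1; 2; 0; 1; 2; 0; 1; 2; 0; 1]; [:: 0; 1; 2; 0; 1; 2; 0; 1; 2; 0; 1; 0]; [:: 2; 1; 2; 0; 1; 2; 0; 1; 2; 0; 1; 0]; [:: 2; 0; 1; 2; 0; 1; 2; 0; 1; 2; 0; 1]; [:: 2; 0; 1; 2; 0; 1; 2; 0; 1; 2; 0; 1; 0]; [:: 1; 2; 0; 1; 2; 0; 1; 2; 0; 1; 2; 0; 1]; [:: 1; 2; 0; 1; 2; 0; 1; 2; 0; 1; 2; 0; 1; 0]].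
Definition f_tic : Q5 := (1%:R, 0%:R).
Lemma check_tic : checkAll v0_tic words_tic gens_tic f_tic false.
Proof. by vm_compute. Qed.

Definition v0_srd : V := mkV (1%:R, 0%:R) (1%:R, 2%:R) (1%:R, 0%:R).
Definition gens_srd : seq V := [:: mkV (1%:R, 0%:R) (1%:R, 0%:R) (1%:R, 2%:R); mkV (1%:R, 1%:R) (0%:R, 1%:R) (0%:R, 2%:R); mkV (2%:R, 1%:R) (0%:R, 0%:R) (1%:R, 1%:R)].
Definition words_srd : seq (seq nat) := [:: [:: ]; [:: 0]; [:: 2]; [:: 1; 0]; [:: 2; 0]; [:: 1; 2]; [:: 2; 1; 0]; [:: 1; 2; 0]; [:: 0; 1; 2]; [:: 2; 1; 2]; [:: 1; 2; 1; 0]; [:: 0; 1; 2; 0]; [:: 2; 1; 2; 0]; [:: 2; 0; 1; 2]; [:: 1; 2; 1; 2]; [:: 0; 1; 2; 1; 0]; [:: 2; 1; 2; 1; 0]; [:: 2; 0; 1; 2; 0]; [:: 1; 2; 1; 2; 0]; [:: 1; 2; 0; 1; 2]; [:: 0; 1; 2; 1; 2]; [:: 2; 0; 1; 2; 1; 0]; [:: 1; 2; 1; 2; 1; 0]; [:: 1; 2; 0; 1; 2; 0]; [:: 0; 1; 2; 1; 2; 0]; [:: 0; 1; 2; 0; 1; 2]; [:: 2; 1; 2; 0; 1; 2]; [:: 1; 2; 0; 1; 2; 1; 0]; [:: 0; 1; 2; 1; 2; 1; 0]; [:: 0; 1; 2; 0; 1; 2; 0]; [:: 2; 1; 2; 0;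 1; 2; 0]; [:: 2; 0; 1; 2; 0; 1; 2]; [:: 1; 2; 1; 2; 0; 1; 2]; [:: 0; 1; 2; 0; 1; 2; 1; 0]; [:: 2; 1; 2; 0; 1; 2; 1; 0]; [:: 2; 0; 1; 2; 0; 1; 2; 0]; [:: 1; 2; 1; 2; 0; 1; 2; 0]; [:: 1; 2; 0; 1; 2; 0; 1; 2]; [:: 0; 1; 2; 1; 2; 0; 1; 2]; [:: 2; 0; 1; 2; 0; 1; 2; 1; 0]; [:: 1; 2; 1; 2; 0; 1; 2; 1; 0]; [:: 1; 2; 0; 1; 2; 0; 1; 2; 0]; [:: 0; 1; 2; 1; 2; 0; 1; 2; 0]; [:: 0; 1; 2; 0; 1; 2; 0; 1; 2]; [:: 2; 1; 2; 0; 1; 2; 0; 1; 2]; [:: 1; 2; 0; 1; 2; 0; 1; 2; 1; 0]; [:: 0; 1; 2; 1; 2; 0; 1; 2; 1; 0]; [:: 0; 1; 2; 0; 1; 2; 0; 1; 2; 0]; [:: 2; 1; 2; 0; 1; 2; 0; 1; 2; 0]; [:: 2; 0; 1; 2; 0; 1; 2; 0; 1; 2]; [:: 0; 1; 2; 0; 1; 2; 0; 1; 2; 1; 0]; [:: 2; 1; 2; 0; 1; 2; 0; 1; 2; 1; 0]; [:: 2; 0; 1; 2; 0; 1; 2; 0; 1; 2; 0]; [:: 1; 2; 0; 1; 2; 0; 1; 2; 0; 1; 2]; [:: 2; 0; 1; 2; 0; 1; 2; 0; 1; 2; 1; 0]; [:: 1; 2; 0; 1; 2; 0; 1; 2; 0;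 1; 2; 0]; [:: 2; 1; 2; 0; 1; 2; 0; 1; 2; 0; 1; 2]; [:: 1; 2; 0; 1; 2; 0; 1; 2; 0; 1; 2; 1; 0]; [:: 2; 1; 2; 0; 1; 2; 0; 1; 2; 0; 1; 2; 0]; [:: 2; 1; 2; 0; 1; 2; 0; 1; 2; 0; 1; 2; 1; 0]].
Definition f_srd : Q5 := (1%:R, 0%:R).
Lemma check_srd : checkAll v0_srd words_srd gens_srd f_srd true.
Proof. by vm_compute. Qed.

Definition v0_tdd : V := mkV (0%:R, 0%:R) (1%:R, 3%:R) (1%:R, 0%:R).
Definition gens_tdd : seq V := [:: mkV (0%:R, 0%:R) ((- 1%:R), 1%:R) (2%:R, 1%:R); mkV ((- 1%:R), 1%:R) (0%:R, 1%:R) (0%:R, 2%:R); mkV (0%:R, 1%:R) (2%:R, 0%:R) (1%:R, 1%:R)].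
Definition words_tdd : seq (seq nat) := [:: [:: ]; [:: 1]; [:: 2]; [:: 0; 1]; [:: 2; 1]; [:: 1; 2]; [:: 2; 0; 1]; [:: 1; 2; 1]; [:: 0; 1; 2]; [:: 2; 1; 2]; [:: 1; 2; 0; 1]; [:: 0; 1; 2; 1]; [:: 2; 1; 2; 1]; [:: 2; 0; 1; 2]; [:: 1; 2; 1; 2]; [:: 0; 1; 2; 0; 1]; [:: 2; 1; 2; 0; 1]; [:: 2; 0; 1; 2; 1]; [:: 1; 2; 1; 2; 1]; [:: 1; 2; 0; 1; 2]; [:: 0; 1; 2; 1; 2]; [:: 2; 0; 1; 2; 0; 1]; [:: 1; 2; 1; 2; 0; 1]; [:: 1; 2; 0; 1; 2; 1]; [:: 0; 1; 2; 1; 2; 1]; [:: 0; 1; 2; 0; 1; 2]; [:: 2; 1; 2; 0; 1; 2]; [:: 1; 2; 0; 1; 2; 0; 1]; [:: 0; 1; 2; 1; 2; 0; 1]; [:: 0; 1; 2; 0; 1; 2; 1]; [:: 2; 1; 2; 0; 1; 2; 1]; [:: 2; 0; 1; 2; 0; 1; 2]; [:: 1; 2; 1; 2; 0; 1; 2]; [:: 0; 1; 2; 0; 1; 2; 0; 1]; [:: 2; 1; 2; 0; 1; 2; 0; 1]; [:: 2; 0; 1; 2; 0; 1; 2; 1]; [:: 1; 2; 1; 2; 0; 1; 2; 1]; [:: 1; 2; 0; 1; 2; 0; 1; 2]; [:: 0; 1; 2; 1; 2; 0; 1; 2]; [:: 2; 0; 1; 2; 0; 1; 2; 0; 1]; [::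 1; 2; 1; 2; 0; 1; 2; 0; 1]; [:: 1; 2; 0; 1; 2; 0; 1; 2; 1]; [:: 0; 1; 2; 1; 2; 0; 1; 2; 1]; [:: 0; 1; 2; 0; 1; 2; 0; 1; 2]; [:: 2; 1; 2; 0; 1; 2; 0; 1; 2]; [:: 1; 2; 0; 1; 2; 0; 1; 2; 0; 1]; [:: 0; 1; 2; 1; 2; 0; 1; 2; 0; 1]; [:: 0; 1; 2; 0; 1; 2; 0; 1; 2; 1]; [:: 2; 1; 2; 0; 1; 2; 0; 1; 2; 1]; [:: 2; 0; 1; 2; 0; 1; 2; 0; 1; 2]; [:: 0; 1; 2; 0; 1; 2; 0; 1; 2; 0; 1]; [:: 2; 1; 2; 0; 1; 2; 0; 1; 2; 0; 1]; [:: 2; 0; 1; 2; 0; 1; 2; 0; 1; 2; 1]; [:: 1; 2; 0; 1; 2; 0; 1; 2; 0; 1; 2]; [:: 2; 0; 1; 2; 0; 1; 2; 0; 1; 2; 0; 1]; [:: 1; 2; 0; 1; 2; 0; 1; 2; 0; 1; 2; 1]; [:: 2; 1; 2; 0; 1; 2; 0; 1; 2; 0; 1; 2]; [:: 1; 2; 0; 1; 2; 0; 1; 2; 0; 1; 2; 0; 1]; [:: 2; 1; 2; 0; 1; 2; 0; 1; 2; 0; 1; 2; 1]; [:: 2; 1; 2; 0; 1; 2; 0; 1; 2; 0; 1; 2; 0; 1]].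
Definition f_tdd : Q5 := (0%:R, 1%:R).
Lemma check_tdd : checkAll v0_tdd words_tdd gens_tdd f_tdd true.
Proof. by vm_compute. Qed.

Definition v0_grd : V := mkV (1%:R, 0%:R) (1%:R, 4%:R) (1%:R, 0%:R).
Definition gens_grd : seq V := [:: mkV ((- 1%:R), 1%:R) ((- 1%:R), 1%:R) (3%:R, 1%:R); mkV ((- 2%:R), 2%:R) (0%:R, 1%:R) (1%:R, 2%:R); mkV ((- 1%:R), 1%:R) (1%:R, 1%:R) ((- 1%:R), 3%:R); mkV ((- 1%:R), 2%:R) (2%:R, 0%:R) (2%:R, 1%:R); mkV (0%:R, 1%:R) (3%:R, 0%:R) (0%:R, 2%:R)].
Definition words_grd : seq (seq nat) := [:: [:: ]; [:: 0]; [:: 1]; [:: 2]; [:: 1; 0]; [:: 2; 0]; [:: 0; 1]; [:: 2; 1]; [:: 1; 2]; [:: 0; 1; 0]; [:: 2; 1; 0]; [:: 1; 2; 0]; [:: 2; 0; 1]; [:: 1; 2; 1]; [:: 0; 1; 2]; [:: 2; 1; 2]; [:: 2; 0; 1; 0]; [:: 1; 2; 1; 0]; [:: 0; 1; 2; 0]; [:: 2; 1; 2; 0]; [:: 1; 2; 0; 1]; [:: 0; 1; 2; 1]; [:: 2; 1; 2; 1]; [:: 2; 0; 1; 2]; [:: 1; 2; 1; 2]; [:: 1; 2; 0; 1; 0]; [:: 0; 1; 2; 1; 0]; [:: 2; 1; 2; 1; 0]; [:: 2; 0; 1; 2; 0]; [:: 1; 2; 1; 2; 0]; [:: 0; 1;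 2; 0; 1]; [:: 2; 1; 2; 0; 1]; [:: 2; 0; 1; 2; 1]; [:: 1; 2; 1; 2; 1]; [:: 1; 2; 0; 1; 2]; [:: 0; 1; 2; 1; 2]; [:: 0; 1; 2; 0; 1; 0]; [:: 2; 1; 2; 0; 1; 0]; [:: 2; 0; 1; 2; 1; 0]; [:: 1; 2; 1; 2; 1; 0]; [:: 1; 2; 0; 1; 2; 0]; [:: 0; 1; 2; 1; 2; 0]; [:: 2; 0; 1; 2; 0; 1]; [:: 1; 2; 1; 2; 0; 1]; [:: 1; 2; 0; 1; 2; 1]; [:: 0; 1; 2; 1; 2; 1]; [:: 0; 1; 2; 0; 1; 2]; [:: 2; 1; 2; 0; 1; 2]; [:: 2; 0; 1; 2; 0; 1; 0]; [:: 1; 2; 1; 2; 0; 1; 0]; [:: 1; 2; 0; 1; 2; 1; 0]; [:: 0; 1; 2; 1; 2; 1; 0]; [:: 0; 1; 2; 0; 1; 2; 0]; [:: 2; 1; 2; 0; 1; 2; 0]; [:: 1; 2; 0; 1; 2; 0; 1]; [:: 0; 1; 2; 1; 2; 0; 1]; [:: 0; 1; 2; 0; 1; 2; 1]; [:: 2; 1; 2; 0; 1; 2; 1]; [:: 2; 0; 1; 2; 0; 1; 2]; [:: 1; 2; 1; 2; 0; 1; 2]; [:: 1; 2; 0; 1; 2; 0; 1; 0]; [:: 0; 1; 2; 1; 2; 0; 1; 0]; [:: 0; 1; 2; 0; 1; 2; 1; 0]; [:: 2; 1; 2; 0; 1; 2; 1; 0]; [:: 2; 0; 1; 2; 0; 1;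 2; 0]; [:: 1; 2; 1; 2; 0; 1; 2; 0]; [:: 0; 1; 2; 0; 1; 2; 0; 1]; [:: 2; 1; 2; 0; 1; 2; 0; 1]; [:: 2; 0; 1; 2; 0; 1; 2; 1]; [:: 1; 2; 1; 2; 0; 1; 2; 1]; [:: 1; 2; 0; 1; 2; 0; 1; 2]; [:: 0; 1; 2; 1; 2; 0; 1; 2]; [:: 0; 1; 2; 0; 1; 2; 0; 1; 0]; [:: 2; 1; 2; 0; 1; 2; 0; 1; 0]; [:: 2; 0; 1; 2; 0; 1; 2; 1; 0]; [:: 1; 2; 1; 2; 0; 1; 2; 1; 0]; [:: 1; 2; 0; 1; 2; 0; 1; 2; 0]; [:: 0; 1; 2; 1; 2; 0; 1; 2; 0]; [:: 2; 0; 1; 2; 0; 1; 2; 0; 1]; [:: 1; 2; 1; 2; 0; 1; 2; 0; 1]; [:: 1; 2; 0; 1; 2; 0; 1; 2; 1]; [:: 0; 1; 2; 1; 2; 0; 1; 2; 1]; [:: 0; 1; 2; 0; 1; 2; 0; 1; 2]; [:: 2; 1; 2; 0; 1; 2; 0; 1; 2]; [:: 2; 0; 1; 2; 0; 1; 2; 0; 1; 0]; [:: 1; 2; 1; 2; 0; 1; 2; 0; 1; 0]; [:: 1; 2; 0; 1; 2; 0; 1; 2; 1; 0]; [:: 0; 1; 2; 1; 2; 0; 1; 2; 1; 0]; [:: 0; 1; 2; 0; 1; 2; 0; 1; 2; 0]; [:: 2; 1; 2; 0; 1; 2; 0; 1; 2; 0]; [:: 1; 2; 0; 1; 2; 0;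 1; 2; 0; 1]; [:: 0; 1; 2; 1; 2; 0; 1; 2; 0; 1]; [:: 0; 1; 2; 0; 1; 2; 0; 1; 2; 1]; [:: 2; 1; 2; 0; 1; 2; 0; 1; 2; 1]; [:: 2; 0; 1; 2; 0; 1; 2; 0; 1; 2]; [:: 1; 2; 0; 1; 2; 0; 1; 2; 0; 1; 0]; [:: 0; 1; 2; 1; 2; 0; 1; 2; 0; 1; 0]; [:: 0; 1; 2; 0; 1; 2; 0; 1; 2; 1; 0]; [:: 2; 1; 2; 0; 1; 2; 0; 1; 2; 1; 0]; [:: 2; 0; 1; 2; 0; 1; 2; 0; 1; 2; 0]; [:: 0; 1; 2; 0; 1; 2; 0; 1; 2; 0; 1]; [:: 2; 1; 2; 0; 1; 2; 0; 1; 2; 0; 1]; [:: 2; 0; 1; 2; 0; 1; 2; 0; 1; 2; 1]; [:: 1; 2; 0; 1; 2; 0; 1; 2; 0; 1; 2]; [:: 0; 1; 2; 0; 1; 2; 0; 1; 2; 0; 1; 0]; [:: 2; 1; 2; 0; 1; 2; 0; 1; 2; 0; 1; 0]; [:: 2; 0; 1; 2; 0; 1; 2; 0; 1; 2; 1; 0]; [:: 1; 2; 0; 1; 2; 0; 1; 2; 0; 1; 2; 0]; [:: 2; 0; 1; 2; 0; 1; 2; 0; 1; 2; 0; 1]; [:: 1; 2; 0; 1; 2; 0; 1; 2; 0; 1; 2; 1]; [:: 2; 1; 2; 0; 1; 2; 0; 1; 2; 0; 1; 2]; [:: 2; 0; 1; 2; 0; 1; 2; 0; 1; 2; 0; 1;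 0]; [:: 1; 2; 0; 1; 2; 0; 1; 2; 0; 1; 2; 1; 0]; [:: 2; 1; 2; 0; 1; 2; 0; 1; 2; 0; 1; 2; 0]; [:: 1; 2; 0; 1; 2; 0; 1; 2; 0; 1; 2; 0; 1]; [:: 2; 1; 2; 0; 1; 2; 0; 1; 2; 0; 1; 2; 1]; [:: 1; 2; 0; 1; 2; 0; 1; 2; 0; 1; 2; 0; 1; 0]; [:: 2; 1; 2; 0; 1; 2; 0; 1; 2; 0; 1; 2; 1; 0]; [:: 2; 1; 2; 0; 1; 2; 0; 1; 2; 0; 1; 2; 0; 1]; [:: 2; 1; 2; 0; 1; 2; 0; 1; 2; 0; 1; 2; 0; 1; 0]].
Definition f_grd : Q5 := (0%:R, 1%:R).
Lemma check_grd : checkAll v0_grd words_grd gens_grd f_grd true.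
Proof. by vm_compute. Qed.


Section Items.
Variable R : realType.
Local Notation tau := (tau R).
Local Notation ev := (@ev R).
Local Notation evV := (@evV R).

Lemma Ppar_vec6 (x1 x2 x3 x4 x5 x6 : R) :
  Ppar R *m vec6 x1 x2 x3 x4 x5 x6 = (spar R)^-1 *:
    vec3 (x1 - x2 + tau * x5 - tau * x6) (tau * x1 + tau * x2 + x3 + x4)
         (tau * x3 - tau * x4 + x5 + x6).
Proof.
apply/matrixP => i j; rewrite !mxE !big_ord_recr big_ord0 /= !mxE /= add0r.
case: i => [[|[|[|//]]] ?]; by rewrite /= ?mxE /=; ring.
Qed.

Lemma scale_vec6 (r x1 x2 x3 x4 x5 x6 : R) :
  r *: vec6 x1 x2 x3 x4 x5 x6 = vec6 (r * x1) (r * x2) (r * x3) (r * x4) (r * x5) (r * x6).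
Proof. by apply/matrixP => i j; rewrite !mxE; case: i => [[|[|[|[|[|[|//]]]]]] ?]. Qed.

Lemma tau_neq0 : tau != 0. Proof. by rewrite gt_eqF // tau_gt0. Qed.

Lemma tauV : tau^-1 = tau - 1.
Proof.
apply: (mulfI tau_neq0); rewrite mulfV ?tau_neq0 //.
by rewrite mulrBr mulr1 -expr2 tau2; ring.
Qed.

Lemma tau3 : tau ^+ 3 = 2 * tau + 1.
Proof. by rewrite exprS tau2 mulrDr mulr1 -expr2 tau2; ring. Qed.

Lemma spar_gt0 : 0 < spar R.
Proof.
rewrite /spar sqrtr_gt0 mulr_gt0 //; have := tau_gt0 R; lra.
Qed.

Lemma sqrt_spar : Num.sqrt (2 / (2 + tau)) / 2 = (spar R)^-1.
Proof.
have y0 : 0 < 2 + tau by have := tau_gt0 R; lra.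
have h : Num.sqrt (2 / (2 + tau)) * spar R = 2.
  rewrite /spar -sqrtrM; last by rewrite divr_ge0 // ltW.
  have -> : 2 / (2 + tau) * (2 * (2 + tau)) = 2 ^+ 2 by field; rewrite gt_eqF.
  by rewrite sqrtr_sqr gtr0_norm.
have s0 : spar R != 0 by rewrite gt_eqF // spar_gt0.
apply: (mulIf s0); rewrite mulVf // mulrAC h; by field.
Qed.

Lemma evT_eq q (x y z : R) : ev q.1.1 = x -> ev q.1.2 = y -> ev q.2 = z -> evT R q = (x, y, z).
Proof. by rewrite /evT => -> -> ->. Qed.

End Items.


Ltac evtac := rewrite /ev /= ?(rmorph0, rmorph1, rmorphN, rmorph_nat, rmorphM, fmorphV, fmorph_div);
  rewrite ?tauV ?tau2 ?tau3 /=; ring.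
Ltac lsteq := match goal with
 | |- [::] = [::] => reflexivity
 | |- _ :: _ = _ :: _ => apply: (congr2 cons); [apply/esym/evT_eq; evtac | lsteq]
end.

Section Models.
Variable R : realType.
Lemma mod_ico : icosahedron R = cyc_signs (map (@evT R) gens_ico).
Proof. rewrite /icosahedron; congr cyc_signs; rewrite /=; lsteq. Qed.
Lemma mod_dod : dodecahedron R = cyc_signs (map (@evT R) gens_dod).
Proof. rewrite /dodecahedron; congr cyc_signs; rewrite /=; lsteq. Qed.
Lemma mod_icd : icosidodecahedron R = cyc_signs (map (@evT R) gens_icd).
Proof. rewrite /icosidodecahedron; congr cyc_signs; rewrite /=; lsteq. Qed.
Lemma mod_tic : truncated_icosahedron R = cyc_signs (map (@evT R) gens_tic).
Proof. rewrite /truncated_icosahedron; congr cyc_signs; rewrite /=; lsteq. Qed.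
Lemma mod_srd : small_rhombicosidodecahedron R = cyc_signs (map (@evT R) gens_srd).
Proof. rewrite /small_rhombicosidodecahedron; congr cyc_signs; rewrite /=; lsteq. Qed.
Lemma mod_tdd : truncated_dodecahedron R = cyc_signs (map (@evT R) gens_tdd).
Proof. rewrite /truncated_dodecahedron; congr cyc_signs; rewrite /=; lsteq. Qed.
Lemma mod_grd : great_rhombicosidodecahedron R = cyc_signs (map (@evT R) gens_grd).
Proof. rewrite /great_rhombicosidodecahedron; congr cyc_signs; rewrite /=; lsteq. Qed.
End Models.


Lemma item_gen (R : realType) (lam : 'cV[R]_6) (w : 'cV[R]_3) (P : 'cV[R]_3 -> Prop) (s : R)
  v0 words gensQ f sw :
  checkAll v0 words gensQ f sw -> P = cyc_signs (map (@evT R) gensQ) -> s != 0 -> 0 < ev R f ->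
  inD6 lam -> pi_par lam = w -> w = s *: evV R v0 -> item_claim lam w P.
Proof. move=> hc -> s0 f0 hD hp hw; split => //. rewrite hp hw; exact: (similar_core s0 f0 hc). Qed.

Lemma sqrt5_irr (R : realType) (m1 m2 : int) : (m1, m2) <> (0, 0) ->
  (m1%:~R : R) + m2%:~R * Num.sqrt 5 != 0.
Proof.
move=> h; apply/negP => /eqP e.
have [m20 | m2n0] := eqVneq m2 0.
  by apply: h; move: e; rewrite m20 rmorph0 mul0r addr0 => /eqP; rewrite intr_eq0 => /eqP ->.
have e2 : (m1 ^+ 2)%:~R = (5 * m2 ^+ 2)%:~R :> R.
  have e1 : (m1%:~R : R) = - (m2%:~R * Num.sqrt 5) by apply/eqP; rewrite -subr_eq0 opprK e.
  rewrite !rmorphXn rmorphM /= e1 sqrrN exprMn sqrt5_2 mulrC rmorphXn.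
  done.
move/eqP: e2; rewrite eqr_int => /eqP e2.
have : (`|m1| ^ 2 = 5 * `|m2| ^ 2)%N.
  by have := congr1 absz e2; rewrite abszM !abszX.
move=> e3.
have n0 : (0 < `|m2|)%N by rewrite absz_gt0.
have n1 : (0 < `|m1|)%N.
  have : (0 < 5 * `|m2| ^ 2)%N by rewrite muln_gt0 expn_gt0 n0.
  by rewrite -e3 expn_gt0 orbF.
have := congr1 (logn 5) e3.
rewrite lognM // ?expn_gt0 ?n0 // !lognX [logn 5 5]logn_prime //=.
move=> /(congr1 odd); by rewrite oddD !oddM.
Qed.


Ltac evpos := rewrite /ev /= ?(rmorph0, rmorph1, rmorph_nat) ?mul0r ?addr0 ?add0r ?mul1r;
  first [exact: tau_gt0 | exact: ltr01 | by rewrite ltr0n].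
Ltac d6ent := apply/matrixP => - [[|[|[|[|[|[|//]]]]]] ?] ?; rewrite !mxE /=;
  rewrite ?(rmorphD, rmorphB, rmorphN) /=.

Unset Implicit Arguments.
Theorem mainTheorem1 (R : realType) (m1 m2 : int) :
  (2 %| m1 + m2)%Z -> (m1, m2) <> (0, 0) ->
  let a : R := m1%:~R in
  let b : R := m2%:~R in
  let t : R := tau R in
  let c : R := Num.sqrt (2 / (2 + t)) * (a - b + 2 * b * t) in
  item_claim (vec6 a b b b b (- b)) ((c / 2) *: vec3 1 t 0) (icosahedron R) /\
      item_claim ((2:R)^-1 *: vec6 (a + 3 * b) (a + 3 * b) (a + 3 * b)
                                   (a - b) (a - b) (a - b))
                 ((c / 2) *: vec3 0 (t ^+ 2) 1) (dodecahedron R) /\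
      item_claim (vec6 (a + b) (a + b) (2 * b) (2 * b) 0 0)
                 (c *: vec3 0 t 0) (icosidodecahedron R) /\
      item_claim (vec6 (2 * a + b) (a + 2 * b) (3 * b) (3 * b) b (- b))
                 ((c / 2) *: vec3 1 (3 * t) 0) (truncated_icosahedron R) /\
      item_claim ((2:R)^-1 *: vec6 (3 * (a + b)) (a + 5 * b) (a + 5 * b)
                                   (a + b) (a + b) (a - 3 * b))
                 ((c / 2) *: vec3 1 (2 * t + 1) 1) (small_rhombicosidodecahedron R) /\
      item_claim ((2:R)^-1 *: vec6 (3 * a + 5 * b) (3 * a + 5 * b) (a + 7 * b)
                                   (a + 3 * b) (a - b) (a - b))
                 ((c / 2) *: vec3 0 (3 * t + 1) 1) (truncated_dodecahedron R) /\
      item_claim ((2:R)^-1 *: vec6 (5 * (a + b)) (3 * a + 7 * b) (a + 9 * b)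
                                   (a + 5 * b) (a + b) (a - 3 * b))
                 ((c / 2) *: vec3 1 (4 * t + 1) 1) (great_rhombicosidodecahedron R).
Proof.
move=> H2 H0; cbv zeta.
have [n hn] : exists n : int, m1 = n + n - m2.
  by case/dvdzP: H2 => q hq; exists q; lia.
have ha : (m1%:~R : R) = n%:~R + n%:~R - m2%:~R by rewrite hn rmorphB rmorphD.
set a : R := m1%:~R in ha *.
set b : R := m2%:~R in ha *.
set N : R := n%:~R in ha.
set K := a - b + 2 * b * tau R.
set c := Num.sqrt (2 / (2 + tau R)) * K.
have ht2 := tau2 R.
have ht3 := tau3 R.
have hb2 : b * tau R ^+ 2 = b * tau R + b by rewrite ht2; ring.
have ha2 : a * tau R ^+ 2 = a * tau R + a by rewrite ht2; ring.
have hb3 : b * tau R ^+ 3 = 2 * b * tau R + b by rewrite ht3; ring.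
have ha3 : a * tau R ^+ 3 = 2 * a * tau R + a by rewrite ht3; ring.
have hK : K != 0.
  have -> : K = a + b * Num.sqrt 5 by rewrite /K /Defs.tau; field.
  exact: sqrt5_irr.
have hc2 : c / 2 = (spar R)^-1 * K by rewrite /c -sqrt_spar; ring.
have hc : c = (spar R)^-1 * (2 * K) by rewrite mulrCA -hc2; field.
have hs : c / 2 != 0 by rewrite hc2 mulf_neq0 // invr_eq0 gt_eqF // spar_gt0.
split.
  apply: (item_gen (v0 := v0_ico) (words := words_ico) (gensQ := gens_ico) (f := f_ico) (sw := false)
    check_ico (mod_ico R) hs).
  - rewrite /f_ico; evpos.
  - exists (fun i : 'I_6 => nth 0 [:: n + n - m2; m2; m2; m2; m2; - m2] i); split.
      by rewrite !big_ord_recr big_ord0 /=; apply/dvdzP; exists (n + m2); ring.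
    d6ent; lra.
  - rewrite /pi_par Ppar_vec6 hc2 -scalerA; congr (_ *: _); rewrite scale_vec3; congr vec3; rewrite /K; lra.
  - congr (_ *: _); rewrite /evV /=; congr vec3; evtac.
split.
  apply: (item_gen (v0 := v0_dod) (words := words_dod) (gensQ := gens_dod) (f := f_dod) (sw := false)
    check_dod (mod_dod R) hs).
  - rewrite /f_dod; evpos.
  - exists (fun i : 'I_6 => nth 0 [:: n + m2; n + m2; n + m2; n - m2; n - m2; n - m2] i); split.
      by rewrite !big_ord_recr big_ord0 /=; apply/dvdzP; exists (3 * n); ring.
    d6ent; lra.
  - rewrite /pi_par scale_vec6 Ppar_vec6 hc2 -scalerA; congr (_ *: _); rewrite scale_vec3; congr vec3; rewrite /K; lra.
  - congr (_ *: _); rewrite /evV /=; congr vec3; evtac.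
split.
  apply: (item_gen (v0 := v0_icd) (words := words_icd) (gensQ := gens_icd) (f := f_icd) (sw := true)
    check_icd (mod_icd R) hs).
  - rewrite /f_icd; evpos.
  - exists (fun i : 'I_6 => nth 0 [:: n + n; n + n; m2 + m2; m2 + m2; 0; 0] i); split.
      by rewrite !big_ord_recr big_ord0 /=; apply/dvdzP; exists (n + n + m2 + m2); ring.
    d6ent; lra.
  - rewrite /pi_par Ppar_vec6 hc -scalerA; congr (_ *: _); rewrite scale_vec3; congr vec3; rewrite /K; lra.
  - rewrite !scale_vec3 /evV /=; congr vec3; rewrite /ev /= ?(rmorph0, rmorph1, rmorph_nat); lra.
split.
  apply: (item_gen (v0 := v0_tic) (words := words_tic) (gensQ := gens_tic) (f := f_tic) (sw := false)
    check_tic (mod_tic R) hs).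
  - rewrite /f_tic; evpos.
  - exists (fun i : 'I_6 => nth 0 [:: n + n + n + n - m2; n + n + m2; m2 + m2 + m2; m2 + m2 + m2; m2; - m2] i); split.
      by rewrite !big_ord_recr big_ord0 /=; apply/dvdzP; exists (3 * n + 3 * m2); ring.
    d6ent; lra.
  - rewrite /pi_par Ppar_vec6 hc2 -scalerA; congr (_ *: _); rewrite scale_vec3; congr vec3; rewrite /K; lra.
  - congr (_ *: _); rewrite /evV /=; congr vec3; evtac.
split.
  apply: (item_gen (v0 := v0_srd) (words := words_srd) (gensQ := gens_srd) (f := f_srd) (sw := true)
    check_srd (mod_srd R) hs).
  - rewrite /f_srd; evpos.
  - exists (fun i : 'I_6 => nth 0 [:: n + n + n; n + m2 + m2; n + m2 + m2; n; n; n - m2 - m2] i); split.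
      by rewrite !big_ord_recr big_ord0 /=; apply/dvdzP; exists (4 * n + m2); ring.
    d6ent; lra.
  - rewrite /pi_par scale_vec6 Ppar_vec6 hc2 -scalerA; congr (_ *: _); rewrite scale_vec3; congr vec3; rewrite /K; lra.
  - congr (_ *: _); rewrite /evV /=; congr vec3; evtac.
split.
  apply: (item_gen (v0 := v0_tdd) (words := words_tdd) (gensQ := gens_tdd) (f := f_tdd) (sw := true)
    check_tdd (mod_tdd R) hs).
  - rewrite /f_tdd; evpos.
  - exists (fun i : 'I_6 => nth 0 [:: n + n + n + m2; n + n + n + m2; n + m2 + m2 + m2; n + m2; n - m2; n - m2] i); split.
      by rewrite !big_ord_recr big_ord0 /=; apply/dvdzP; exists (5 * n + 2 * m2); ring.
    d6ent; lra.
  - rewrite /pi_par scale_vec6 Ppar_vec6 hc2 -scalerA; congr (_ *: _); rewrite scale_vec3; congr vec3; rewrite /K; lra.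
  - congr (_ *: _); rewrite /evV /=; congr vec3; evtac.
apply: (item_gen (v0 := v0_grd) (words := words_grd) (gensQ := gens_grd) (f := f_grd) (sw := true)
    check_grd (mod_grd R) hs).
  - rewrite /f_grd; evpos.
  - exists (fun i : 'I_6 => nth 0 [:: n + n + n + n + n; n + n + n + m2 + m2; n + m2 + m2 + m2 + m2; n + m2 + m2; n; n - m2 - m2] i); split.
      by rewrite !big_ord_recr big_ord0 /=; apply/dvdzP; exists (6 * n + 3 * m2); ring.
    d6ent; lra.
  - rewrite /pi_par scale_vec6 Ppar_vec6 hc2 -scalerA; congr (_ *: _); rewrite scale_vec3; congr vec3; rewrite /K; lra.
  - congr (_ *: _); rewrite /evV /=; congr vec3; evtac.
Qed.
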